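(* Let $V=V_1\oplus\cdots\oplus V_b$ with each $V_i\cong\mathbb{F}_2^s$. Let $\circ$ and $\diamond$ be two parallel alternative operations on $V$, defined componentwise by alternative operations $\circ_1,\dots,\circ_b$ and $\diamond_1,\dots,\diamond_b$ on $V_1,\dots,V_b$ respectively, such that $\dim W_{\circ_i}=\dim W_{\diamond_i}=s-2$ for all $i$. Then there exists $g\in\mathrm{GL}(V)$ such that $T_\diamond=T_\circ^g$.
   Context: Vectors are row vectors and maps are written in postfix notation. For a vector space $X$ over $\mathbb{F}_2$, an alternative operation on $X$ is defined from an elementary abelian $2$-subgroup $T<\mathrm{AGL}(X,+)$ acting regularly on $X$: writing $\tau_a$ for the unique element of $T$ with $0\tau_a=a$, set $a\circ b:=a\tau_b$; the translation group of $\circ$ is $T_\circ=T$. It is assumed that the xor-translations $x\mapsto x+a$ are affine with respect to $\circ$, i.e. lie in the normaliser of $T_\circ$ in $\mathrm{Sym}(X)$. The weak key space is $W_\circ=\{k: x\circ k=x+k\ \forall x\}$. An alternative operation $\circ$ on $V=V_1\oplus\cdots\oplus V_b$ is parallel, defined by alternative operations $\circ_j$ on $V_j$, if $(x_1,\dots,x_b)\circ(y_1,\dots,y_b)=(x_1\circ_1y_1,\dots,x_b\circ_by_b)$ for all $x_j,y_j\in V_j$. For a subgroup $T$ and $g\in\mathrm{GL}(V)$, $T^g:=gTg^{-1}$. *)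

(* Defs.v *)
From HB Require Import structures.
From mathcomp Require Import all_boot all_order all_algebra all_fingroup.
Set Implicit Arguments. Unset Strict Implicit. Unset Printing Implicit Defensive.
Import GRing.Theory.

(* Vector spaces over F_2 are modelled as matrix spaces 'M['F_2]_(m, n)
   (row vectors when m = 1).  Maps act on the right (postfix notation of the
   paper), which matches MathComp's permutation product: (g * h) x = h (g x). *)
Notation mat m n := 'M['F_2]_(m, n).

Section AltOp.
Variables m n : nat.
Local Notation X := (mat m n).
Implicit Types (f g t : {perm X}) (T : {set {perm X}}).

Definition is_GL g : Prop :=
  forall (a : 'F_2) (x y : X), g (a *: x + y)%R = (a *: g x + g y)%R.

Definition is_affine f : Prop :=
  forall (a : 'F_2) (x y : X),
    (f (a *: x + y) - f 0 = a *: (f x - f 0) + (f y - f 0))%R.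

Definition xor_tr (a : X) : {perm X} := perm (@addIr _ a).

(* T^g := g T g^{-1} (postfix composition: first g, then t, then g^{-1}) *)
Definition conj_by (T : {set {perm X}}) g : {set {perm X}} :=
  [set (g * t * g^-1)%g | t in T].

Definition is_alt_op T : Prop :=
  [/\ [/\ group_set T, abelian T & (forall t, t \in T -> (t * t = 1)%g)],
      (forall t, t \in T -> is_affine t),
      (forall x y : X, exists! t, t \in T /\ t x = y) &
      (forall a : X, conj_by T (xor_tr a) = T)].

Definition tau T (a : X) : {perm X} := odflt 1%g [pick t in T | t 0%R == a].

Definition circ T (a b : X) : X := tau T b a.

Definition weak_keys T : {set X} :=
  [set k | [forall x, circ T x k == (x + k)%R]].

End AltOp.

(* The alternative operation on V = V_1 (+) ... (+) V_b, V = 'M_(b, s) whose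
   i-th row is the V_i-component, is parallel, defined by the operations
   given by Ts i on V_i = 'rV_s. *)
Definition parallel (b s : nat) (T : {set {perm mat b s}})
    (Ts : 'I_b -> {set {perm mat 1 s}}) : Prop :=
  forall (i : 'I_b) (x y : mat b s),
    row i (circ T x y) = circ (Ts i) (row i x) (row i y).

Definition has_dim (s : nat) (W : {set mat 1 s}) (d : nat) : Prop :=
  exists M : 'M['F_2]_s, \rank M = d /\ forall k, k \in W <-> (k <= M)%MS.

(* Main.v *)
Require Import Defs.
From HB Require Import structures.
From mathcomp Require Import all_boot all_order all_algebra all_fingroup.
From mathcomp Require Import ring.
Set Implicit Arguments. Unset Strict Implicit. Unset Printing Implicit Defensive.
Import GRing.Theory.
Local Open Scope ring_scope.

Lemma F2_add_self (x : 'F_2) : x + x = 0.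
Proof. case: x => [[|[|k]] Hk]; apply/val_inj => //. Qed.

Lemma F2_cases (x : 'F_2) : x = 0 \/ x = 1.
Proof. case: x => [[|[|k]] Hk]; [left|right|]; try by apply/val_inj. by []. Qed.

Lemma mxF2_add_self m n (v : 'M['F_2]_(m, n)) : v + v = 0.
Proof. by apply/matrixP => i j; rewrite !mxE F2_add_self. Qed.

Lemma mxF2_opp m n (v : 'M['F_2]_(m, n)) : - v = v.
Proof. by rewrite -[LHS]addr0 -(mxF2_add_self v) addrA addNr add0r. Qed.

Section Alt.
Variables m n : nat.
Local Notation X := (mat m n).
Variable T : {set {perm X}}.
Hypothesis HT : is_alt_op T.

Lemma tau_spec a : tau T a \in T /\ tau T a 0 = a.
Proof.
case: HT => _ _ Hreg _.
have [t [[tT t0] _]] := Hreg 0 a.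
rewrite /tau; case: pickP => [t' /andP [H1 /eqP H2] //|].
by move/(_ t); rewrite tT t0 eqxx.
Qed.

Lemma tau_in a : tau T a \in T. Proof. by case: (tau_spec a). Qed.
Lemma tau0 a : tau T a 0 = a. Proof. by case: (tau_spec a). Qed.

Lemma tau_uniq t : t \in T -> tau T (t 0) = t.
Proof.
case: HT => _ _ Hreg _ tT.
have [t1 [_ U]] := Hreg 0 (t 0).
have e1 := U t (conj tT erefl).
have e2 := U _ (conj (tau_in (t 0)) (tau0 (t 0))).
by rewrite -e2 e1.
Qed.

Definition gT : {group {perm X}}.
Proof. case: HT => [[gs _ _] _ _ _]; exact: (Group gs). Defined.
Lemma gTE : gval gT = T. Proof. by rewrite /gT; case: HT => [[]]. Qed.

Lemma circ_comm x y : circ T x y = circ T y x.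
Proof.
case: HT => [[_ ab _] _ _ _].
rewrite /circ -{1}(tau0 x) -{2}(tau0 y) -!permM.
have := centsP ab _ (tau_in x) _ (tau_in y).
by move=> /= ->.
Qed.

Lemma tauM a c : (tau T a * tau T c)%g = tau T (circ T a c).
Proof.
have H : (tau T a * tau T c)%g \in T.
  by rewrite -gTE groupM // gTE tau_in.
by rewrite -(tau_uniq H) permM tau0.
Qed.

Lemma circA x a c : circ T (circ T x a) c = circ T x (circ T a c).
Proof. by rewrite /circ -permM tauM. Qed.

Lemma circ_self a : circ T a a = 0.
Proof.
case: HT => [[_ _ inv] _ _ _].
by rewrite /circ -[X in tau T a X](tau0 a) -permM inv ?tau_in // perm1.
Qed.

Lemma circ0l y : circ T 0 y = y.
Proof. exact: tau0. Qed.

Lemma circ0r x : circ T x 0 = x.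
Proof. by rewrite circ_comm circ0l. Qed.

Definition pr x y := circ T x y - x - y.

Lemma circE x y : circ T x y = x + y + pr x y.
Proof. by rewrite /pr -[_ - x - y]addrA -opprD [RHS]addrC subrK. Qed.

Lemma prC x y : pr x y = pr y x.
Proof. by rewrite /pr circ_comm -!addrA (addrC (-y)). Qed.

Lemma prDl x x' y : pr (x + x') y = pr x y + pr x' y.
Proof.
case: HT => _ Haff _ _.
have := Haff _ (tau_in y) 1 x x'.
rewrite !scale1r tau0 -/(circ T (x + x') y) -/(circ T x y) -/(circ T x' y).
move=> H; apply/matrixP => i j; move: (congr1 (fun M : X => M i j) H).
rewrite /pr !mxE.
set a' := circ T (x + x') y i j; set a := circ T x y i j; set b := circ T x' y i j.
move=> H'; have -> : a' = (a - y i j) + (b - y i j) + y i j by rewrite -H' subrK.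
ring.
Qed.

Lemma prDr x y y' : pr x (y + y') = pr x y + pr x y'.
Proof. by rewrite prC prDl !(prC x). Qed.

Lemma pr_self x : pr x x = 0.
Proof. by rewrite /pr circ_self sub0r -opprD mxF2_add_self oppr0. Qed.

Lemma pr0l y : pr 0 y = 0.
Proof. by rewrite /pr circ0l subr0 subrr. Qed.

Lemma pr0r y : pr y 0 = 0.
Proof. by rewrite prC pr0l. Qed.

Lemma prZl (a : 'F_2) x y : pr (a *: x) y = a *: pr x y.
Proof. by case: (F2_cases a) => ->; rewrite ?scale0r ?scale1r ?pr0l. Qed.

Lemma prZr (a : 'F_2) x y : pr x (a *: y) = a *: pr x y.
Proof. by rewrite prC prZl prC. Qed.

Lemma helper (P Q L R : 'F_2) : L = R -> P - (L - R) = Q -> P = Q.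
Proof. by move=> -> ; rewrite subrr subr0. Qed.

Lemma prA x a c : pr (pr x a) c = pr x (pr a c).
Proof.
have := circA x a c.
rewrite !circE !prDl !prDr => H; apply/matrixP => i j.
move: (congr1 (fun M : X => M i j) H); rewrite !mxE => H'.
apply: (helper H'); ring.
Qed.

Lemma weak_keysP k : reflect (forall x, pr x k = 0) (k \in weak_keys T).
Proof.
rewrite inE; apply: (iffP forallP) => H x.
  by move/eqP: (H x); rewrite circE -{2}[x + k]addr0 => /addrI.
by rewrite circE H addr0.
Qed.

End Alt.

Definition c0 n (u : 'rV['F_2]_(1 + (1 + n))) : 'F_2 := lsubmx u 0 0.
Definition c1 n (u : 'rV['F_2]_(1 + (1 + n))) : 'F_2 := lsubmx (rsubmx u) 0 0.

Lemma mul11 q (a : 'M['F_2]_1) (e : 'M['F_2]_(1, q)) : a *m e = a 0 0 *: e.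
Proof. by rewrite {1}[a]mx11_scalar mul_scalar_mx. Qed.

Lemma expand3 n p (u : 'rV['F_2]_(1 + (1 + n))) (e1 e2 : 'rV['F_2]_p) (B : 'M_(n, p)) :
  u *m col_mx e1 (col_mx e2 B) = c0 u *: e1 + (c1 u *: e2 + rsubmx (rsubmx u) *m B).
Proof.
by rewrite -{1}(hsubmxK u) mul_row_col -{1}(hsubmxK (rsubmx u)) mul_row_col !mul11.
Qed.

Lemma sub_col_r m1 m2 p (A : 'M['F_2]_(m1, p)) (C : 'M['F_2]_(m2, p)) :
  (C <= col_mx A C)%MS.
Proof. by apply/submxP; exists (row_mx 0 1%:M); rewrite mul_row_col mul0mx mul1mx add0r. Qed.

Section Core.
Variable n : nat.
Local Notation V := (mat 1 n.+2).
Variable T : {set {perm V}}.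
Hypothesis HT : is_alt_op T.
Variable B : 'M['F_2]_(n, n.+2).
Hypothesis HB : forall k, k \in weak_keys T <-> (k <= B)%MS.
Hypothesis rB : \rank B = n.
Variables e1 e2 : V.
Hypothesis He : pr T e1 e2 != 0.

Lemma prW k x : (k <= B)%MS -> pr T x k = 0.
Proof. by move/HB/weak_keysP; apply. Qed.

Lemma prWl k x : (k <= B)%MS -> pr T k x = 0.
Proof. by move=> kB; rewrite prC // prW. Qed.

Lemma notin_e1 (f1 f2 : V) : pr T f1 f2 != 0 -> ~~ (f1 <= col_mx f2 B)%MS.
Proof.
move=> Hf; apply/negP; rewrite -addsmxE => /sub_addsmxP [[a k] /= E].
move: Hf; rewrite E prDl // mul11 prZl // pr_self // scaler0 add0r prWl ?submxMl //.
by rewrite eqxx.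
Qed.

Lemma X0_unit : (col_mx e1 (col_mx e2 B) : 'M_(n.+2)) \in unitmx.
Proof.
rewrite -row_full_unit.
have H1 : (B < col_mx e2 B)%MS.
  rewrite ltmxE sub_col_r /= col_mx_sub submx_refl andbT.
  by apply/negP => /(prW e1) H0; move: He; rewrite H0 eqxx.
have H2 : (col_mx e2 B < col_mx e1 (col_mx e2 B))%MS.
  rewrite ltmxE sub_col_r /= col_mx_sub submx_refl andbT.
  exact: notin_e1.
move: H1 H2; rewrite !ltmxErank => /andP [_ r1] /andP [_ r2].
rewrite /row_full eqn_leq rank_leq_col /=.
by rewrite rB in r1; apply: leq_trans r2.
Qed.

Lemma X0_form u v :
  pr T (u *m col_mx e1 (col_mx e2 B)) (v *m col_mx e1 (col_mx e2 B)) =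
  (c0 u * c1 v + c1 u * c0 v) *: pr T e1 e2.
Proof.
rewrite !expand3 !prDl // !prDr // !prZl // !prZr // !pr_self //.
have hu := submxMl (rsubmx (rsubmx u)) B.
have hv := submxMl (rsubmx (rsubmx v)) B.
rewrite ?(prW _ hu) ?(prW _ hv) ?(prWl _ hu) ?(prWl _ hv) (prC _ e2 e1) //.
rewrite !scaler0 !addr0 !add0r !scalerA scalerDl; congr (_ + _); congr (_ *: _); ring.
Qed.

End Core.

Lemma unit11 (L : 'M['F_2]_1) : L \in unitmx -> L = 1%:M.
Proof.
rewrite unitmxE det_mx11 unitfE => H.
rewrite [L]mx11_scalar; congr (_ %:M).
by case: (F2_cases (L 0 0)) H => ->; rewrite ?eqxx.
Qed.

Lemma rV_pid k (c : 'rV['F_2]_k) : c != 0 -> c = pid_mx 1 *m row_ebase c.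
Proof.
move=> nz; have := mulmx_ebase c.
by rewrite rank_rV nz (unit11 (col_ebase_unit c)) mul1mx => ->.
Qed.

Lemma rV_trans k (c c' : 'rV['F_2]_k) : c != 0 -> c' != 0 ->
  exists R : 'M_k, R \in unitmx /\ c *m R = c'.
Proof.
move=> nz nz'; exists (invmx (row_ebase c) *m row_ebase c'); split.
  by rewrite unitmx_mul unitmx_inv !row_ebase_unit.
rewrite {1}(rV_pid nz) {2}(rV_pid nz') mulmxA -(mulmxA _ (row_ebase c)).
by rewrite mulmxV ?row_ebase_unit // mulmx1.
Qed.

Definition wstd n : 'rV['F_2]_(1 + (1 + n)) := row_mx 0 (row_mx 0 (const_mx 1)).

Lemma std_form n (T : {set {perm mat 1 n.+2}}) :
  is_alt_op T -> has_dim (weak_keys T) n ->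
  exists X : 'M['F_2]_(n.+2), X \in unitmx /\
    forall u v : 'rV_(1 + (1 + n)),
      pr T (u *m X) (v *m X) = (c0 u * c1 v + c1 u * c0 v) *: (wstd n *m X).
Proof.
move=> HT [M [rM HM]].
have [B0 eB0] : exists B0 : 'M['F_2]_(\rank M, n.+2), (B0 :=: M)%MS.
  by exists (row_base M); exact: eq_row_base.
move: B0 eB0; rewrite rM => B eB.
have HB : forall k, k \in weak_keys T <-> (k <= B)%MS.
  by move=> k; rewrite HM eB.
have rB : \rank B = n by rewrite eB.
have [e1 ne1] : exists e1 : mat 1 n.+2, ~~ (e1 <= B)%MS.
  have : ~~ (1%:M <= B)%MS.
    by rewrite sub1mx /row_full rB (ltn_eqF (leqW (ltnSn n))).
  by case/row_subPn => i Hi; exists (row i 1%:M).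
have [e2 ne2] : exists e2, pr T e1 e2 != 0.
  have ne1' : ~ (e1 \in weak_keys T) := fun H => negP ne1 (proj1 (HB e1) H).
  case: (boolP [exists e2, pr T e1 e2 != 0]) => [/existsP [x Hx] | ]; first by exists x.
  rewrite negb_exists => /forallP H; exfalso; apply: ne1'.
  apply/weak_keysP => // x; rewrite prC //; exact/eqP/negbNE/H.
set w := pr T e1 e2.
have wB : (w <= B)%MS.
  apply/(HB w)/weak_keysP => // x.
  have Ex : x = (x *m invmx (col_mx e1 (col_mx e2 B) : 'M_(n.+2))) *m
               (col_mx e1 (col_mx e2 B) : 'M_(n.+2)).
    by rewrite mulmxKV // (X0_unit HT HB rB ne2).
  rewrite Ex expand3 !prDl // !prZl // (prWl HT HB _ (submxMl _ _)).
  have -> : pr T e1 w = 0 by rewrite /w -prA // pr_self // pr0l.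
  have -> : pr T e2 w = 0 by rewrite /w (prC _ e1) // -prA // pr_self // pr0l.
  by rewrite !scaler0 !addr0.
case/submxP: wB => c Ec.
have nzc : c != 0 by apply: contra ne2 => /eqP c0; rewrite -/w Ec c0 mul0mx.
have n0 : (0 < n)%N.
  have : forall c' : 'rV['F_2]_n, c' != 0 -> (0 < n)%N.
    by case: (n) => // c'; rewrite [c']thinmx0 eqxx.
  by move/(_ c nzc).
have nz1 : (const_mx 1 : 'rV['F_2]_n) != 0.
  apply/eqP => /matrixP /(_ 0 (Ordinal n0)); rewrite !mxE => /eqP.
  by rewrite oner_eq0.
have [R [uR ER]] := rV_trans nz1 nzc.
set B' := R *m B.
have eB' : (B' :=: B)%MS by apply: eqmxMfull; rewrite row_full_unit.
have HB' : forall k, k \in weak_keys T <-> (k <= B')%MS.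
  by move=> k; rewrite eB'.
have rB' : \rank B' = n by rewrite eB'.
exists (col_mx e1 (col_mx e2 B')); split; first exact: (X0_unit HT HB' rB' ne2).
move=> u v; rewrite (X0_form HT HB') /wstd mul_row_col mul0mx add0r.
by rewrite mul_row_col mul0mx add0r /B' mulmxA ER -Ec.
Qed.

Lemma comp_iso n (Tc Td : {set {perm mat 1 n.+2}}) :
  is_alt_op Tc -> is_alt_op Td ->
  has_dim (weak_keys Tc) n -> has_dim (weak_keys Td) n ->
  exists A : 'M['F_2]_(n.+2), A \in unitmx /\
    forall x y, circ Tc (x *m A) (y *m A) = circ Td x y *m A.
Proof.
move=> hc hd Wc Wd.
have [Xc [uc Fc]] := std_form hc Wc.
have [Xd [ud Fd]] := std_form hd Wd.
exists (invmx Xd *m Xc); split; first by rewrite unitmx_mul unitmx_inv ud uc.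
move=> x y.
set u : 'rV_(1 + (1 + n)) := x *m invmx Xd.
set v : 'rV_(1 + (1 + n)) := y *m invmx Xd.
have Ex : x = u *m Xd by rewrite /u mulmxKV.
have Ey : y = v *m Xd by rewrite /v mulmxKV.
rewrite !mulmxA -/u -/v !circE // Fc.
rewrite [in pr Td x y]Ex [in pr Td _ y]Ey Fd.
rewrite !mulmxDl -/u -/v -!scalemxAl mulmxK //.
Qed.

Theorem theorem4 (b s : nat)
    (Tc Td : {set {perm mat b s}})
    (Tcs Tds : 'I_b -> {set {perm mat 1 s}}) :
  is_alt_op Tc -> is_alt_op Td ->
  (forall i, is_alt_op (Tcs i)) -> (forall i, is_alt_op (Tds i)) ->
  parallel Tc Tcs -> parallel Td Tds ->
  (2 <= s)%N ->
  (forall i, has_dim (weak_keys (Tcs i)) (s - 2)) ->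
  (forall i, has_dim (weak_keys (Tds i)) (s - 2)) ->
  exists g : {perm mat b s}, is_GL g /\ Td = conj_by Tc g.
Proof.
case: s Tc Td Tcs Tds => [|[|n]] Tc Td Tcs Tds hc hd hcs hds pc pd // _.
rewrite !subSS subn0 => Wc Wd.
have [A HA] := fin_all_exists (fun i => comp_iso (hcs i) (hds i) (Wc i) (Wd i)).
pose G (x : mat b n.+2) : mat b n.+2 := \matrix_(i, j) (row i x *m A i) 0 j.
have rowG x i : row i (G x) = row i x *m A i by apply/rowP => j; rewrite !mxE.
have Ginj : injective G.
  move=> x y E; apply/row_matrixP => i.
  have := congr1 (row i) E; rewrite !rowG => /(congr1 (mulmx^~ (invmx (A i)))).
  by rewrite !mulmxK //; case: (HA i).
set g := perm Ginj.
have gE x : g x = G x by rewrite permE.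
have hom x y : circ Tc (g x) (g y) = g (circ Td x y).
  apply/row_matrixP => i; rewrite pc !gE !rowG pd.
  by case: (HA i) => _ ->.
have key a : (g * tau Tc (g a) * g^-1)%g = tau Td a.
  apply/permP => x; rewrite !permM.
  rewrite -/(circ Tc (g x) (g a)) hom permK.
  by [].
exists g; split.
  move=> a x y; rewrite !gE; apply/row_matrixP => i.
  rewrite !rowG linearD linearZ /= mulmxDl.
  by rewrite linearD linearZ /= !rowG scalemxAl.
apply/setP => t; apply/idP/imsetP.
  move=> tT; exists (tau Tc (g (t 0))); first exact: tau_in.
  by rewrite key tau_uniq.
case=> t' t'T ->.
rewrite -(tau_uniq hc t'T) -[t' 0](permKV g) key.
exact: tau_in.
Qed.
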